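(* Let $(V,\mathcal H,\iota,W)$ be a generalized functional theory and $k$ a positive integer. Then $\mathrm{conv}_k(\iota^*(\mathcal P))=\bar\iota^*(\bar{\mathcal P})$, where $\bar\iota:V\to i\mathfrak u(\mathcal H\otimes\mathbb C^k)$, $\bar\iota(v)=\iota(v)\otimes\mathbb 1$, and $\bar{\mathcal P}$ is the set of pure states on $\mathcal H\otimes\mathbb C^k$.
   Context: A generalized functional theory is a tuple $(V,\mathcal H,\iota,W)$ with $V$ a finite-dimensional real vector space, $\mathcal H$ a finite-dimensional complex Hilbert space, $\iota:V\to i\mathfrak u(\mathcal H)$ linear into the Hermitian operators, $W$ Hermitian. Density operators on a Hilbert space $\mathcal K$ are regarded as elements of $(i\mathfrak u(\mathcal K))^*$ via the trace pairing; $\iota^*$ and $\bar\iota^*$ are the dual maps. $\mathcal P$ is the set of pure states (rank-one projectors) on $\mathcal H$. For a subset $X$ of a vector space, $\mathrm{conv}_k(X)=\{\sum_{i=1}^k t_is_i: s_i\in X, t_i\ge0,\sum_i t_i=1\}$. *)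

(* Defs.v *)
From HB Require Import structures.
From mathcomp Require Import all_boot all_order all_algebra.
From mathcomp Require Import complex mxtens.
Set Implicit Arguments.
Unset Strict Implicit.
Unset Printing Implicit Defensive.
Import Order.TTheory GRing.Theory Num.Theory.
Local Open Scope ring_scope.

Definition hermitian (R : rcfType) (n : nat) (A : 'M[R[i]]_n) : Prop :=
  map_mx (@conjc R) A^T = A.

Definition pure_state (R : rcfType) (n : nat) (P : 'M[R[i]]_n) : Prop :=
  hermitian P /\ P *m P = P /\ \rank P = 1%N.

Definition real_linear (R : rcfType) (V : vectType R) (n : nat)
  (iota : V -> 'M[R[i]]_n) : Prop :=
  forall (a : R) (v w : V),
    iota (a *: v + w) = (real_complex R a) *: iota v + iota w.

Definition gen_functional_theory (R : rcfType) (V : vectType R) (n : nat)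
  (iota : V -> 'M[R[i]]_n) (W : 'M[R[i]]_n) : Prop :=
  real_linear iota /\ (forall v, hermitian (iota v)) /\ hermitian W.

(* Dual map iota^* : density operator rho |-> (v |-> tr(rho iota(v))) in V^*,
   elements of V^* being represented as (linear) functions V -> R. *)
Definition dual_map (R : rcfType) (V : vectType R) (n : nat)
  (iota : V -> 'M[R[i]]_n) (rho : 'M[R[i]]_n) : V -> R :=
  fun v => complex.Re (\tr (rho *m iota v)).

Definition iota_bar (R : rcfType) (V : vectType R) (n k : nat)
  (iota : V -> 'M[R[i]]_n) : V -> 'M[R[i]]_(n * k) :=
  fun v => iota v *t (1%:M : 'M[R[i]]_k).

Definition conv_k (R : rcfType) (V : vectType R) (k : nat)
  (X : (V -> R) -> Prop) : (V -> R) -> Prop :=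
  fun f => exists (s : 'I_k -> V -> R) (t : 'I_k -> R),
    (forall i, X (s i)) /\ (forall i, 0 <= t i) /\ \sum_(i < k) t i = 1 /\
    f = (fun v => \sum_(i < k) t i * s i v).

(* Main.v *)
Require Import Defs.
From HB Require Import structures.
From mathcomp Require Import all_boot all_order all_algebra.
From mathcomp Require Import complex mxtens.
From mathcomp Require Import ring.
From Stdlib Require Import FunctionalExtensionality PropExtensionality.
Import Order.TTheory GRing.Theory Num.Theory.
Local Open Scope ring_scope.
Local Open Scope complex_scope.
Set Implicit Arguments. Unset Strict Implicit.

Definition projm (R : rcfType) m (u : 'I_m -> R[i]) : 'M[R[i]]_m :=
  \matrix_(a, b) (u a * conjc (u b)).
Definition nrm (R : rcfType) m (u : 'I_m -> R[i]) : R[i] :=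
  \sum_a u a * conjc (u a).
Definition qf (R : rcfType) m (u : 'I_m -> R[i]) (A : 'M[R[i]]_m) : R[i] :=
  \sum_a \sum_b conjc (u a) * A a b * u b.

Lemma nrm_ge0 (R : rcfType) m (u : 'I_m -> R[i]) : 0 <= nrm u.
Proof. by apply: sumr_ge0 => a _; apply: mulcJ_ge0. Qed.

Lemma tr_projm (R : rcfType) m (u : 'I_m -> R[i]) A :
  \tr (projm u *m A) = qf u A.
Proof.
rewrite /mxtrace /qf [RHS]exchange_big /=; apply: eq_bigr => a _.
rewrite mxE; apply: eq_bigr => b _; rewrite mxE.
ring.
Qed.

Lemma projm_pure (R : rcfType) m (u : 'I_m -> R[i]) :
  nrm u = 1 -> pure_state (projm u).
Proof.
move=> hu; split; [|split].
- apply/matrixP => a b; rewrite !mxE rmorphM /= conjcK mulrC.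
  done.
- apply/matrixP => a c; rewrite !mxE.
  transitivity (\sum_b (u a * conjc (u c)) * (u b * conjc (u b))).
    by apply: eq_bigr => b _; rewrite !mxE; ring.
  by rewrite -mulr_sumr -/(nrm u) hu mulr1.
- apply/eqP; rewrite eqn_leq; apply/andP; split.
  have -> : projm u = (\col_a u a) *m (\row_b conjc (u b)).
    apply/matrixP => a b; rewrite !mxE big_ord1 !mxE; done.
  by apply: leq_trans (mxrankM_maxl _ _) (rank_leq_col _).
  rewrite lt0n mxrank_eq0; apply/eqP => h.
  have := congr1 mxtrace h; rewrite mxtrace0.
  have -> : \tr (projm u) = nrm u.
    by rewrite /mxtrace /nrm; apply: eq_bigr => a _; rewrite mxE.
  by rewrite hu => /eqP; rewrite oner_eq0.
Qed.

Lemma conj_mul_ge0 (R : rcfType) (p : R[i]) : 0 <= conjc p * p.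
Proof. by rewrite mulrC mulcJ_ge0. Qed.

Lemma conj_mul_eq0 (R : rcfType) (p : R[i]) : conjc p * p = 0 -> p = 0.
Proof. by move/eqP; rewrite mulf_eq0 conjc_eq0 orbb => /eqP. Qed.

Lemma conjcM (R : rcfType) (a b : R[i]) : conjc (a * b) = conjc a * conjc b.
Proof. exact: rmorphM. Qed.

Lemma pure_projm (R : rcfType) m (P : 'M[R[i]]_m) :
  pure_state P -> exists u, nrm u = 1 /\ P = projm u.
Proof.
case=> hh [hid hrk]; unfold Defs.hermitian in hh.
have herm y z : conjc (P y z) = P z y.
  by have := congr1 (fun M : 'M_m => M z y) hh; rewrite /= !mxE.
have diag z : P z z = \sum_y conjc (P y z) * P y z.
  have := congr1 (fun M : 'M_m => M z z) hid; rewrite /= mxE => <-.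
  by apply: eq_bigr => y _; rewrite herm.
have [x hx] : exists x, P x x != 0.
  case: (pickP (fun x => P x x != 0)) => [x hx|h0]; first by exists x.
  have P0 : P = 0.
    apply/matrixP => y z; rewrite mxE.
    have := h0 z; move/negbT; rewrite negbK diag => /eqP/psumr_eq0P => h.
    by apply: conj_mul_eq0; apply: h => // w _; exact: conj_mul_ge0.
  by move: hrk; rewrite P0 mxrank0.
have hr : \rank (row x P) = 1%N.
  rewrite rank_rV; case: eqP => // /matrixP /(_ 0 x).
  by rewrite !mxE => /eqP; rewrite (negbTE hx).
have : (P <= row x P)%MS.
  have := mxrank_leqif_eq (row_sub x P); rewrite hr hrk => -[_].
  by rewrite eqxx => /esym /andP [].
case/submxP => D hD.
have hP y z : P y z = D y 0 * P x z.
  by rewrite {1}hD mxE big_ord1 mxE.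
have sgt : 0 < P x x.
  rewrite lt_def hx diag; apply: sumr_ge0 => y _; exact: conj_mul_ge0.
set s := P x x in sgt hx.
have sreal : s = (complex.Re s)%:C.
  by rewrite RRe_real // ger0_real // ltW.
have rpos : 0 < complex.Re s by rewrite -ltcR -sreal.
pose c : R[i] := ((Num.sqrt (complex.Re s))^-1)%:C.
have cc : c * c = s^-1.
  rewrite /c -rmorphM /= -expr2 exprVn sqr_sqrtr ?ltW //.
  by rewrite [in RHS]sreal rmorphV //= unitfE gt_eqF.
have cJ : conjc c = c by rewrite /c conjc_real.
exists (fun y => P y x * c); split.
  rewrite /nrm.
  transitivity ((c * c) * \sum_y conjc (P y x) * P y x).
    rewrite mulr_sumr; apply: eq_bigr => y _; rewrite conjcM cJ; ring.
  by rewrite -diag cc mulVf.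
apply/matrixP => y z; rewrite mxE conjcM cJ herm.
have hyx : D y 0 = P y x / s by rewrite (hP y x) -/s mulfK.
rewrite hP hyx.
have -> : P y x * c * (P x z * c) = P y x * P x z * (c * c) by ring.
rewrite cc; ring.
Qed.

Lemma sum_tens (R : rcfType) n k (F : 'I_(n * k) -> R[i]) :
  \sum_x F x = \sum_(j < k) \sum_(a < n) F (mxtens_index (a, j)).
Proof.
rewrite exchange_big pair_big /=.
rewrite (reindex (@mxtens_index n k)) /=; last first.
  by exists (@mxtens_unindex n k) => x _; rewrite (mxtens_indexK, mxtens_unindexK).
by apply: eq_bigr => -[a j].
Qed.

Definition slice (R : rcfType) n k (u : 'I_(n * k) -> R[i]) (j : 'I_k) :
  'I_n -> R[i] := fun a => u (mxtens_index (a, j)).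

Lemma nrm_tens (R : rcfType) n k (u : 'I_(n * k) -> R[i]) :
  nrm u = \sum_j nrm (slice u j).
Proof. by rewrite /nrm sum_tens. Qed.

Lemma qf_tens (R : rcfType) n k (u : 'I_(n * k) -> R[i]) A :
  qf u (A *t (1%:M : 'M_k)) = \sum_j qf (slice u j) A.
Proof.
rewrite /qf sum_tens; apply: eq_bigr => j _; apply: eq_bigr => a _.
rewrite sum_tens /=.
rewrite (bigD1 j) //= [X in _ + X]big1 ?addr0.
  apply: eq_bigr => b _; rewrite tensmxE mxE eqxx mulr1 //.
move=> l hl; apply: big1 => b _; rewrite tensmxE mxE eq_sym (negbTE hl).
by rewrite mulr0 mulr0 mul0r.
Qed.

Lemma qf_scale (R : rcfType) n (c : R[i]) (w : 'I_n -> R[i]) A :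
  qf (fun a => c * w a) A = conjc c * c * qf w A.
Proof.
rewrite /qf mulr_sumr; apply: eq_bigr => a _; rewrite mulr_sumr.
by apply: eq_bigr => b _; rewrite conjcM; ring.
Qed.

Lemma nrm_scale (R : rcfType) n (c : R[i]) (w : 'I_n -> R[i]) :
  nrm (fun a => c * w a) = conjc c * c * nrm w.
Proof.
rewrite /nrm mulr_sumr; apply: eq_bigr => a _.
by rewrite conjcM; ring.
Qed.

Lemma Re_sum (R : rcfType) I (r : seq I) (F : I -> R[i]) :
  complex.Re (\sum_(i <- r) F i) = \sum_(i <- r) complex.Re (F i).
Proof.
elim: r => [|x r IH]; first by rewrite !big_nil.
rewrite !big_cons -IH.
by case: (F x) => ? ?; case: (\sum_(j <- r) F j) => ? ?.
Qed.

Lemma Re_realM (R : rcfType) (t : R) (z : R[i]) :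
  complex.Re (t%:C * z) = t * complex.Re z.
Proof. by case: z => a b /=; rewrite mul0r subr0. Qed.

Lemma csq (R : rcfType) (x : R) : 0 <= x ->
  conjc ((Num.sqrt x)%:C) * (Num.sqrt x)%:C = x%:C.
Proof.
by move=> hx; rewrite conjc_real -rmorphM /= -expr2 sqr_sqrtr.
Qed.

Lemma cinvsq (R : rcfType) (x : R) : 0 < x ->
  conjc (((Num.sqrt x)^-1)%:C) * ((Num.sqrt x)^-1)%:C = (x^-1)%:C.
Proof.
by move=> hx; rewrite conjc_real -rmorphM /= -expr2 exprVn sqr_sqrtr ?ltW.
Qed.

Lemma dual_projm (R : rcfType) (V : vectType R) n (iota : V -> 'M[R[i]]_n) u v :
  dual_map iota (projm u) v = complex.Re (qf u (iota v)).
Proof. by rewrite /dual_map tr_projm. Qed.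

Unset Implicit Arguments. Set Strict Implicit.

Theorem lemma2p38 (R : rcfType) (V : vectType R) (n : nat)
  (iota : V -> 'M[R[i]]_n) (W : 'M[R[i]]_n) (k : nat) :
  gen_functional_theory iota W -> (0 < k)%N ->
  conv_k k (fun f => exists P : 'M[R[i]]_n, pure_state P /\ f = dual_map iota P)
  = (fun f => exists P : 'M[R[i]]_(n * k),
        pure_state P /\ f = dual_map (iota_bar k iota) P).
Proof.
move=> _ _.
apply: functional_extensionality => f; apply: propositional_extensionality.
split.
- case=> [s [t [hs [ht0 [ht1 ->]]]]].
  have hU : forall j : 'I_k, exists u : 'I_n -> R[i],
      nrm u = 1 /\ s j = dual_map iota (projm u).
    move=> j; have [P [hP ->]] := hs j.
    by have [u [hu ->]] := pure_projm hP; exists u.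
  have [U hUj] := fin_all_exists hU.
  pose Wv : 'I_(n * k) -> R[i] := fun x =>
    (Num.sqrt (t (mxtens_unindex x).2))%:C *
      U (mxtens_unindex x).2 (mxtens_unindex x).1.
  have hsl j : slice Wv j = (fun a => (Num.sqrt (t j))%:C * U j a).
    by apply: functional_extensionality => a; rewrite /slice /Wv mxtens_indexK.
  exists (projm Wv); split.
    apply: projm_pure.
    rewrite nrm_tens.
    transitivity (\sum_j (t j)%:C).
      apply: eq_bigr => j _; rewrite hsl nrm_scale csq // (proj1 (hUj j)).
      by rewrite mulr1.
    by rewrite -rmorph_sum ht1.
  apply: functional_extensionality => v.
  rewrite dual_projm /iota_bar qf_tens Re_sum.
  apply: eq_bigr => j _.
  rewrite hsl qf_scale csq // Re_realM (proj2 (hUj j)) dual_projm //.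
- case=> P [hP ->].
  have [Wv [hW ->]] := pure_projm hP.
  have [x0 _] : exists x0 : 'I_(n * k), true.
    case: (pickP (fun _ : 'I_(n * k) => true)) => [x0 _|h0]; first by exists x0.
    by move: hW; rewrite /nrm big_pred0 // => /eqP; rewrite eq_sym oner_eq0.
  pose a0 := (mxtens_unindex x0).1.
  pose e0 : 'I_n -> R[i] := fun a => if a == a0 then 1 else 0.
  have he0 : nrm e0 = 1.
    rewrite /nrm (bigD1 a0) //= big1 ?addr0 /e0 ?eqxx ?conjc1 ?mulr1 //.
    by move=> a /negbTE ->; rewrite mul0r.
  pose tau j := complex.Re (nrm (slice Wv j)).
  have htau j : nrm (slice Wv j) = (tau j)%:C.
    by rewrite /tau RRe_real // ger0_real // nrm_ge0.
  have tau0 j : 0 <= tau j by rewrite -ler0c -htau nrm_ge0.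
  pose Q j : 'I_n -> R[i] := if tau j == 0 then e0
    else fun a => ((Num.sqrt (tau j))^-1)%:C * slice Wv j a.
  have hQ j : nrm (Q j) = 1.
    rewrite /Q; case: eqP => // h.
    have tp : 0 < tau j by rewrite lt_def tau0 andbT; apply/eqP.
    rewrite nrm_scale cinvsq // htau -rmorphM /= mulVf //; exact/eqP.
  exists (fun j => dual_map iota (projm (Q j))), tau; split; [|split; [|split]].
  + by move=> j; exists (projm (Q j)); split => //; apply: projm_pure.
  + exact: tau0.
  + transitivity (complex.Re (nrm Wv)); last by rewrite hW.
    by rewrite nrm_tens Re_sum.
  + apply: functional_extensionality => v.
    rewrite dual_projm /iota_bar qf_tens Re_sum.
    apply: eq_bigr => j _; rewrite dual_projm /Q.
    case: eqP => h.
      rewrite h mul0r.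
      have w0 a : slice Wv j a = 0.
        have := htau j; rewrite h /nrm => /psumr_eq0P h2.
        have := h2 (fun b _ => mulcJ_ge0 _) a isT.
        by move/eqP; rewrite mulf_eq0 conjc_eq0 orbb => /eqP.
      by rewrite /qf big1 // => a _; rewrite big1 // => b _; rewrite w0 conjc0 !mul0r.
    have tp : 0 < tau j by rewrite lt_def tau0 andbT; apply/eqP.
    rewrite qf_scale cinvsq // Re_realM mulrA mulfV ?mul1r //; exact/eqP.
Qed.
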